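(* Let $\mathcal{A}=(Q,\delta,I,F)$ be a complete Büchi automaton with delayed simulation $\preceq_{\mathit{de}}$, and let $p,q,r\in Q$, $a\in\Sigma$ be such that $q\in\delta(r,a)$ and $p\preceq_{\mathit{de}}q$. Let $\mathcal{A}'=(Q,\delta',I,F)$ where $\delta'=\delta\cup\{r\xrightarrow{a}p\}$. Then $\preceq_{\mathit{de}}$ is included in the delayed simulation on $\mathcal{A}'$.
   Context: A Büchi automaton is $\mathcal{A}=(Q,\delta,I,F)$ over a finite alphabet $\Sigma$ with $\delta:Q\times\Sigma\to2^Q$, complete if $\delta(q,a)\ne\emptyset$ always; $r\xrightarrow{a}p\in\delta$ means $p\in\delta(r,a)$, and $\delta\cup\{r\xrightarrow{a}p\}$ denotes the transition function obtained by adding $p$ to $\delta(r,a)$. Delayed simulation on a BA: in the game from $(p_0,r_0)$, in round $i$ Spoiler picks a transition $p_i\xrightarrow{\alpha_i}p_{i+1}$ of the automaton and Duplicator answers with a transition $r_i\xrightarrow{\alpha_i}r_{i+1}$ on the same symbol; a Duplicator strategy is a map $\sigma$ with $\sigma(r,p\xrightarrow{a}p')$ a successor of $r$ under $a$ (no lookahead). Duplicator wins if for all $i$, $p_i\in F$ implies $r_k\in F$ for some $k\ge i$. The delayed simulation relates $(p,r)$ iff Duplicator has a winning strategy from $(p,r)$. *)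

(* Defs.v *)
From mathcomp Require Import all_boot.
Set Implicit Arguments. Unset Strict Implicit. Unset Printing Implicit Defensive.

Record BA (Q Sigma : finType) := mkBA {
  delta : Q -> Sigma -> {set Q};
  init  : {set Q};
  final : {set Q} }.

Definition complete (Q Sigma : finType) (A : BA Q Sigma) : Prop :=
  forall (q : Q) (a : Sigma), delta A q a != set0.

Definition add_trans (Q Sigma : finType) (d : Q -> Sigma -> {set Q})
  (r : Q) (a : Sigma) (p : Q) : Q -> Sigma -> {set Q} :=
  fun s b => if (s == r) && (b == a) then p |: d s b else d s b.

Definition add_transition (Q Sigma : finType) (A : BA Q Sigma)
  (r : Q) (a : Sigma) (p : Q) : BA Q Sigma :=
  mkBA (add_trans (delta A) r a p) (init A) (final A).

(* A Duplicator strategy (no lookahead): given the history of previous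
   positions [(p_0,r_0);...;(p_{i-1},r_{i-1})], the current position (p_i,r_i)
   and Spoiler's move p_i -a-> p', it returns Duplicator's answer r_{i+1}. *)
Definition strategy (Q Sigma : finType) :=
  seq (Q * Q) -> Q -> Q -> Sigma -> Q -> Q.

Fixpoint dup_run (Q Sigma : finType) (sigma : strategy Q Sigma)
  (ps : nat -> Q) (als : nat -> Sigma) (r0 : Q) (n : nat) : seq (Q * Q) * Q :=
  match n with
  | 0 => ([::], r0)
  | n'.+1 =>
      let hr := dup_run sigma ps als r0 n' in
      (rcons hr.1 (ps n', hr.2), sigma hr.1 (ps n') hr.2 (als n') (ps n))
  end.

Definition delayed_winning (Q Sigma : finType) (A : BA Q Sigma)
  (sigma : strategy Q Sigma) (p0 r0 : Q) : Prop :=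
  forall (ps : nat -> Q) (als : nat -> Sigma),
    ps 0 = p0 ->
    (forall i, ps i.+1 \in delta A (ps i) (als i)) ->
    let rs := fun n => (dup_run sigma ps als r0 n).2 in
    (forall i, rs i.+1 \in delta A (rs i) (als i)) /\
    (forall i, ps i \in final A -> exists k, i <= k /\ rs k \in final A).

Definition delayed_sim (Q Sigma : finType) (A : BA Q Sigma) (p r : Q) : Prop :=
  exists sigma : strategy Q Sigma, delayed_winning A sigma p r.

(* Main.v *)
From Stdlib Require Import Classical ClassicalEpsilon.
Require Import Defs.
From mathcomp Require Import all_boot.
Set Implicit Arguments. Unset Strict Implicit. Unset Printing Implicit Defensive.

Definition pre (Q Sigma : Type) (ps : nat -> Q) (als : nat -> Sigma) n :=
  mkseq (fun i => (als i, ps i.+1)) n.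

Lemma mkseqS0 (T : Type) (f : nat -> T) n :
  mkseq f n.+1 = f 0 :: mkseq (fun i => f i.+1) n.
Proof.
rewrite /mkseq /=; congr (_ :: _).
have -> : iota 1 n = iota (1 + 0) n by [].
by rewrite iotaDl -map_comp.
Qed.

Definition rwin (Q Sigma : finType) (A : BA Q Sigma)
  (rho : seq (Sigma * Q) -> Q) (s : Q) (b : bool) : Prop :=
  forall (ps : nat -> Q) (als : nat -> Sigma),
    ps 0 = s ->
    (forall i, ps i.+1 \in delta A (ps i) (als i)) ->
    (forall i, rho (pre ps als i.+1) \in delta A (rho (pre ps als i)) (als i)) /\
    (b -> exists k, rho (pre ps als k) \in final A) /\
    (forall i, ps i \in final A -> exists k, i <= k /\ rho (pre ps als k) \in final A).

Definition S (Q Sigma : finType) (A : BA Q Sigma) (s t : Q) (b : bool) : Prop :=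
  exists rho, rho [::] = t /\ rwin A rho s b.

Lemma S_mono (Q Sigma : finType) (A : BA Q Sigma) s t b :
  S A s t b -> S A s t false.
Proof.
move=> [rho [h0 hw]]; exists rho; split => // ps als h1 h2.
have [h3 [_ h5]] := hw ps als h1 h2; by split.
Qed.

Lemma S_F (Q Sigma : finType) (A : BA Q Sigma) s t b :
  s \in final A -> S A s t false -> S A s t b.
Proof.
move=> sF [rho [h0 hw]]; exists rho; split => // ps als h1 h2.
have [h3 [_ h5]] := hw ps als h1 h2; split => //; split => // _.
have h0F : ps 0 \in final A by rewrite h1.
have [k [_ hk]] := h5 0 h0F; by exists k.
Qed.

Definition sh (T : Type) (x : T) (f : nat -> T) := fun n => if n is n'.+1 then f n' else x.

Lemma pre_sh (Q Sigma : Type) (ps : nat -> Q) (als : nat -> Sigma) s c n :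
  pre (sh s ps) (sh c als) n.+1 = (c, ps 0) :: pre ps als n.
Proof. by rewrite /pre mkseqS0. Qed.

Fixpoint cpath (Q Sigma : finType) (A : BA Q Sigma) (c : Sigma) (x : Q) n :=
  if n is n'.+1 then let y := cpath A c x n' in odflt y [pick z in delta A y c] else x.

Lemma cpathP (Q Sigma : finType) (A : BA Q Sigma) c x :
  complete A -> forall i, cpath A c x i.+1 \in delta A (cpath A c x i) c.
Proof.
move=> hc i /=; case: pickP => // h.
by case/eqP: (hc (cpath A c x i) c); apply/setP => z; rewrite inE h.
Qed.

Lemma res1 (Q Sigma : finType) (A : BA Q Sigma) rho s b c s' :
  complete A ->
  rwin A rho s b -> s' \in delta A s c ->
  rho [:: (c, s')] \in delta A (rho [::]) c /\
  rwin A (fun l => rho ((c, s') :: l)) s' ((b || (s \in final A)) && (rho [::] \notin final A)).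
Proof.
move=> hc hw hs.
have key : forall ps als, ps 0 = s' -> (forall i, ps i.+1 \in delta A (ps i) (als i)) ->
   let ps2 := sh s ps in let als2 := sh c als in
   ps2 0 = s /\ (forall i, ps2 i.+1 \in delta A (ps2 i) (als2 i)) /\
   (forall n, rho (pre ps2 als2 n.+1) = rho ((c, s') :: pre ps als n)).
  move=> ps als h1 h2 /=; split => //; split.
    by case => [|i] /=; [rewrite h1 | apply: h2].
  by move=> n; rewrite pre_sh h1.
have [ps0 [als0 [h01 h02]]] : exists ps als, ps 0 = s' /\ (forall i, ps i.+1 \in delta A (ps i) (als i)).
  by exists (cpath A c s'), (fun _ => c); split => //; apply: cpathP.
split.
  have [a1 [a2 a3]] := key _ _ h01 h02.
  have [t1 _] := hw _ _ a1 a2.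
  have := t1 0; rewrite a3 /pre /=. by [].
move=> ps als h1 h2.
have [a1 [a2 a3]] := key _ _ h1 h2.
have [t1 [t2 t3]] := hw _ _ a1 a2.
split; [|split].
- by move=> i; have := t1 i.+1; rewrite !a3.
- case/andP => hb hnF.
  have [k hk] : exists k, rho (pre (sh s ps) (sh c als) k) \in final A.
    case/orP: hb => [/t2 //|sF]; have [k [_ hk]] := t3 0 sF; by exists k.
  case: k hk => [|k]; first by rewrite /pre /= (negbTE hnF).
  by rewrite a3 => hk; exists k.
- move=> i hi; have [k [hik hk]] := t3 i.+1 hi.
  case: k hik hk => [//|k] hik; rewrite a3 => hk; by exists k.
Qed.

Lemma take_mkseq (T : Type) (f : nat -> T) k n :
  take k (mkseq f n) = mkseq f (minn k n).
Proof. by rewrite /mkseq -map_take take_iota. Qed.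

Definition umv (Q Sigma : Type) (rho1 : seq (Sigma * Q) -> Q) (l : seq (Sigma * Q)) :=
  if l is m :: _ then mkseq (fun i => ((nth m l i).1, rho1 (take i.+1 l))) (size l) else [::].

Lemma umv_pre (Q Sigma : Type) (rho1 : seq (Sigma * Q) -> Q) ps als n :
  umv rho1 (pre ps als n) = pre (fun k => rho1 (pre ps als k)) als n.
Proof.
case: n => [//|n].
have [m [l' E]] : exists m l', pre ps als n.+1 = m :: l' by rewrite /pre mkseqS0; eauto.
rewrite E /umv -E size_mkseq.
have H1 : forall i, i < n.+1 -> ((nth m (pre ps als n.+1) i).1, rho1 (take i.+1 (pre ps als n.+1))) = (als i, rho1 (pre ps als i.+1)).
  by move=> i hi; rewrite /pre nth_mkseq // take_mkseq (minn_idPl hi).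
rewrite [RHS]/pre /mkseq; apply/eq_in_map => i; rewrite mem_iota add0n => hi; exact: H1.
Qed.

Definition comp (Q Sigma : Type) (rho1 rho2 : seq (Sigma * Q) -> Q) l := rho2 (umv rho1 l).

Lemma S_comp (Q Sigma : finType) (A : BA Q Sigma) s u t b1 b2 :
  S A s u b1 -> S A u t b2 -> S A s t (b1 || b2).
Proof.
move=> [r1 [h10 w1]] [r2 [h20 w2]]; exists (comp r1 r2); split => // ps als h1 h2.
have [t1 [t2 t3]] := w1 ps als h1 h2.
set us := fun k => r1 (pre ps als k).
have [u1 [u2 u3]] := w2 us als h10 t1.
have E : forall k, comp r1 r2 (pre ps als k) = r2 (pre us als k).
  by move=> k; rewrite /comp umv_pre.
split; [|split].
- by move=> i; rewrite !E.
- case/orP => [/t2 [k hk]|/u2 [k hk]]; last by exists k; rewrite E.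
  have [k' [_ hk']] := u3 k hk; by exists k'; rewrite E.
- move=> i /t3 [k [hik hk]]; have [k' [hk' hk'']] := u3 k hk.
  exists k'; rewrite E; split => //; exact: leq_trans hik hk'.
Qed.

Lemma dup_run_ext (Q Sigma : finType) (sg : strategy Q Sigma) ps ps' als als' r0 n :
  (forall i, i <= n -> ps i = ps' i) -> (forall i, i < n -> als i = als' i) ->
  dup_run sg ps als r0 n = dup_run sg ps' als' r0 n.
Proof.
elim: n => [//|n IH] hp ha /=.
rewrite IH; last by move=> i hi; apply: ha; exact: ltnW.
  by rewrite hp ?ha ?hp //; exact: ltnW.
by move=> i hi; apply: hp; exact: ltnW.
Qed.

Definition rho_of (Q Sigma : finType) (sg : strategy Q Sigma) (x y : Q) (l : seq (Sigma * Q)) :=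
  if l is m :: _ then
    (dup_run sg (fun n => if n is n'.+1 then (nth m l n').2 else x)
                (fun n => (nth m l n).1) y (size l)).2
  else y.

Lemma rho_of_pre (Q Sigma : finType) (sg : strategy Q Sigma) x y ps als n :
  ps 0 = x -> rho_of sg x y (pre ps als n) = (dup_run sg ps als y n).2.
Proof.
move=> h0; case: n => [//|n].
have [m [l' E]] : exists m l', pre ps als n.+1 = m :: l' by rewrite /pre mkseqS0; eauto.
rewrite /rho_of E -E size_mkseq.
congr (_.2); apply: dup_run_ext.
  by case => [|i] hi //=; rewrite /pre nth_mkseq.
by move=> i hi; rewrite /pre nth_mkseq.
Qed.

Lemma poor_rich (Q Sigma : finType) (A : BA Q Sigma) x y :
  delayed_sim A x y -> S A x y false.
Proof.
move=> [sg w]; exists (rho_of sg x y); split => // ps als h1 h2.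
have [w1 w2] := w ps als h1 h2.
have E := fun n => rho_of_pre sg y als n h1.
split; [|split] => //.
- by move=> i; rewrite !E; apply: w1.
- by move=> i /w2 [k hk]; exists k; rewrite E.
Qed.

Fixpoint Y (Q Sigma : finType) (A : BA Q Sigma) (k : nat) (s t : Q) : Prop :=
  match k with
  | 0 => False
  | k'.+1 => forall b s', s' \in delta A s b -> exists t', t' \in delta A t b /\
       S A s' t' true /\ (t' \in final A \/ Y A k' s' t')
  end.

Lemma Y_S (Q Sigma : finType) (A : BA Q Sigma) k s t : Y A k s t -> Y A k.+1 s t.
Proof.
elim: k s t => [//|k IH] s t /= h b s' hs.
have [t' [h1 [h2 h3]]] := h b s' hs; exists t'; split => //; split => //.
by case: h3 => [->|/IH]; auto.
Qed.

Lemma Y_le (Q Sigma : finType) (A : BA Q Sigma) k k' s t : k <= k' -> Y A k s t -> Y A k' s t.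
Proof.
move=> /subnK <-; elim: (k' - k) => [//|d IH] h; rewrite addSn; exact/Y_S/IH.
Qed.

Lemma Y_transfer (Q Sigma : finType) (A : BA Q Sigma) k p q t :
  complete A -> S A p q false -> Y A k q t -> Y A k p t.
Proof.
move=> hc; elim: k p q t => [//|k IH] p q t [r1 [h10 w1]] /= hY b p' hp.
have [hq' w'] := res1 hc w1 hp.
rewrite h10 in hq'.
have Sp'q' : S A p' (r1 [:: (b, p')]) false.
  by apply: (@S_mono _ _ _ _ _ ((false || (p \in final A)) && (r1 [::] \notin final A))); exists (fun l => r1 ((b, p') :: l)).
have [t3 [h1 [h2 h3]]] := hY b _ hq'.
exists t3; split => //; split; first by have := S_comp Sp'q' h2.
case: h3 => [|h3]; [by left|right; exact: IH Sp'q' h3].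
Qed.

Lemma fin_bound (T : finType) (P : T -> nat -> Prop) :
  (forall m k k', k <= k' -> P m k -> P m k') ->
  (forall m, exists k, P m k) -> exists K, forall m, P m K.
Proof.
move=> mono h.
suff [K HK] : exists K, forall m, m \in enum T -> P m K.
  by exists K => m; apply: HK; rewrite mem_enum.
elim: (enum T) => [|x l [K HK]]; first by exists 0.
have [k hk] := h x; exists (maxn k K) => m; rewrite inE => /orP [/eqP ->|hm].
  by apply: mono hk; exact: leq_maxl.
by apply: mono (HK m hm); exact: leq_maxr.
Qed.

Lemma bad_move (Q Sigma : finType) (A : BA Q Sigma) s t :
  (forall k, ~ Y A k s t) ->
  exists m : Sigma * Q, m.2 \in delta A s m.1 /\
    forall t', t' \in delta A t m.1 -> S A m.2 t' true ->
       t' \notin final A /\ forall k, ~ Y A k m.2 t'.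
Proof.
move=> hb; apply: NNPP => hn.
pose P (m : Sigma * Q) k := m.2 \in delta A s m.1 -> exists t', t' \in delta A t m.1 /\
       S A m.2 t' true /\ (t' \in final A \/ Y A k m.2 t').
have [K HK] : exists K, forall m, P m K.
  apply: fin_bound.
    move=> m k k' hk hP hm; have [t' [h1 [h2 h3]]] := hP hm; exists t'; do 2!split => //.
    by case: h3; [left|right; exact: Y_le hk _].
  move=> m; apply: NNPP => hm; apply: hn; exists m.
  split; first by apply: NNPP => hm2; apply: hm; exists 0 => hm3; case: (hm2 hm3).
  move=> t' ht' hS; split.
    apply/negP => hF; apply: hm; exists 0 => _; exists t'; auto.
  move=> k hk; apply: hm; exists k => _; exists t'; auto.
by apply: (hb K.+1) => b s' hs; apply: (HK (b, s')).
Qed.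

Lemma rwin_ext (Q Sigma : finType) (A : BA Q Sigma) f g s b :
  (forall l, f l = g l) -> rwin A f s b -> rwin A g s b.
Proof.
move=> E w ps als h1 h2; have [w1 [w2 w3]] := w ps als h1 h2.
split; [|split].
- by move=> i; rewrite -!E.
- by move=> /w2 [k hk]; exists k; rewrite -E.
- by move=> i /w3 [k hk]; exists k; rewrite -E.
Qed.

Lemma claimA (Q Sigma : finType) (A : BA Q Sigma) s t :
  complete A -> S A s t true -> t \notin final A -> exists k, Y A k s t.
Proof.
move=> hc [rho [h0 w]] htF; apply: NNPP => hn.
have bad0 : forall k, ~ Y A k s t by move=> k hk; apply: hn; exists k.
have [d _] := bad_move bad0.
pose spec x y (m : Sigma * Q) := m.2 \in delta A x m.1 /\
    forall t', t' \in delta A y m.1 -> S A m.2 t' true ->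
       t' \notin final A /\ forall k, ~ Y A k m.2 t'.
pose bm x y := epsilon (inhabits d) (spec x y).
pose g (xl : Q * seq (Sigma * Q)) := let m := bm xl.1 (rho xl.2) in (m.2, rcons xl.2 m).
pose pos n := iter n g (s, [::]).
pose mv n := bm (pos n).1 (rho (pos n).2).
have pos2 : forall n, (pos n).2 = mkseq mv n.
  by elim => [//|n IH]; rewrite /pos iterS -/(pos n) /= mkseqS -IH.
have pos1 : forall n, (pos n.+1).1 = (mv n).2 by [].
pose ps n := (pos n).1; pose als n := (mv n).1.
have Epre : forall n, pre ps als n = mkseq mv n.
  by move=> n; apply: eq_mkseq => i; rewrite /ps /als pos1; case: (mv i).
have Inv : forall n, (forall k, ~ Y A k (ps n) (rho (mkseq mv n))) /\
    rho (mkseq mv n) \notin final A /\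
    rwin A (fun l => rho (mkseq mv n ++ l)) (ps n) true.
  elim => [|n [IH1 [IH2 IH3]]]; first by rewrite /= h0.
  have hsp : spec (ps n) (rho (mkseq mv n)) (mv n).
    rewrite /mv -pos2; apply: epsilon_spec; rewrite pos2; exact: bad_move IH1.
  have E1 : mkseq mv n.+1 = rcons (mkseq mv n) (mv n) by rewrite mkseqS.
  have Eps : ps n.+1 = (mv n).2 by [].
  rewrite E1 Eps; move: hsp; case: (mv n) => [b s'] [hm1 hm2] /=.
  have [hr1 hr2] := res1 hc IH3 hm1.
  rewrite /= cats1 cats0 in hr1; rewrite cats0 IH2 /= in hr2.
  have hS : S A s' (rho (rcons (mkseq mv n) (b, s'))) true.
    exists (fun l => rho (mkseq mv n ++ (b, s') :: l)); split; first by rewrite cats1.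
    exact: hr2.
  have [hF hY] := hm2 _ hr1 hS.
  split => //; split => //.
  by apply: rwin_ext hr2 => l; rewrite cat_rcons.
have hstep : forall i, ps i.+1 \in delta A (ps i) (als i).
  move=> i; have [I1 _] := Inv i.
  have hsp : spec (ps i) (rho (mkseq mv i)) (mv i).
    rewrite /mv -pos2; apply: epsilon_spec; rewrite pos2; exact: bad_move I1.
  by case: hsp.
have [_ [w2 _]] := w ps als erefl hstep.
have [k hk] := w2 erefl.
have [_ [I2 _]] := Inv k.
by rewrite Epre in hk; rewrite hk in I2.
Qed.

Lemma min_ex (P : nat -> Prop) : (exists k, P k) -> exists k, P k /\ forall j, P j -> k <= j.
Proof.
move=> [n hn]; elim: n {-2}n (leqnn n) hn => [|N IH] n hn hP.
  by exists n => //; split => // j _; rewrite leqn0 in hn; rewrite (eqP hn).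
case: (classic (exists j, j < n /\ P j)) => [[j [hj hPj]]|hno].
  by apply: (IH j) => //; rewrite -ltnS; exact: leq_trans hj hn.
exists n; split => // j hj; rewrite leqNgt; apply/negP => hjn; apply: hno; by exists j.
Qed.

Lemma S_true_any (Q Sigma : finType) (A : BA Q Sigma) s t b :
  S A s t true -> S A s t b.
Proof. by case: b => // /S_mono. Qed.

Lemma S_false_F (Q Sigma : finType) (A : BA Q Sigma) s t x :
  S A s t false -> S A s t ((s \in final A) && x).
Proof. by case sF: (s \in final A) => //= h; apply: S_F. Qed.

Lemma inD (Q Sigma : finType) (A : BA Q Sigma) r a p s b x :
  x \in delta A s b -> x \in delta (add_transition A r a p) s b.
Proof. by move=> h; rewrite /= /add_trans; case: ifP => // _; rewrite inE h orbT. Qed.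

Definition spec' (Q Sigma : finType) (A : BA Q Sigma) r a p (s t : Q) (bit : bool) b s' t' :=
  t' \in delta (add_transition A r a p) t b /\
  S A s' t' ((bit || (s' \in final A)) && (t' \notin final A)) /\
  (bit -> t' \in final A \/ forall k, Y A k.+1 s t -> Y A k s' t').

Lemma trap (Q Sigma : finType) (A : BA Q Sigma) r a p q s t bit b s' :
  complete A -> q \in delta A r a -> S A p q false ->
  S A s t bit -> (bit -> t \notin final A) ->
  s' \in delta (add_transition A r a p) s b ->
  exists t', spec' A r a p s t bit b s' t'.
Proof.
move=> hc hq hpq hS hbit hs'.
have [old|new] : s' \in delta A s b \/ [/\ s = r, b = a & s' = p].
  move: hs'; rewrite /= /add_trans; case: ifP => [/andP [/eqP -> /eqP ->]|_]; last by left.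
  rewrite !inE; case/orP => [/eqP ->|]; by [right|left].
- case: bit hS hbit => hS hbit.
  + have tF := hbit erefl.
    have [k0 [hk0 hmin]] := min_ex (claimA hc hS tF).
    case: k0 hk0 hmin => [//|k1] hk0 hmin.
    have [t' [h1 [h2 h3]]] := hk0 b s' old.
    exists t'; split; first exact: inD.
    split; first exact: S_true_any.
    move=> _; case: h3 => [|h3]; [by left|right => k hk].
    by apply: Y_le h3; have := hmin _ hk.
  + have [rho [h0 w]] := hS.
    have [h1 h2] := res1 hc w old.
    rewrite h0 in h1.
    exists (rho [:: (b, s')]); split; first exact: inD.
    split => //; apply: S_false_F; apply: (@S_mono _ _ _ _ _ ((false || (s \in final A)) && (rho [::] \notin final A))).
    by exists (fun l => rho ((b, s') :: l)).
- case: new => Es Eb Ep; rewrite Es Eb Ep in hS hbit *.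
  case: bit hS hbit => hS hbit.
  + have tF := hbit erefl.
    have [k0 [hk0 hmin]] := min_ex (claimA hc hS tF).
    case: k0 hk0 hmin => [//|k1] hk0 hmin.
    have [t' [h1 [h2 h3]]] := hk0 a q hq.
    exists t'; split; first exact: inD.
    split; first by apply: S_true_any; exact: (S_comp hpq h2).
    move=> _; case: h3 => [|h3]; [by left|right => k hk].
    apply: Y_transfer hc hpq _.
    by apply: Y_le h3; have := hmin _ hk.
  + have [rho [h0 w]] := hS.
    have [h1 h2] := res1 hc w hq.
    rewrite h0 in h1.
    exists (rho [:: (a, q)]); split; first exact: inD.
    split => //; apply: S_false_F.
    have hq' : S A q (rho [:: (a, q)]) ((false || (r \in final A)) && (rho [::] \notin final A)).
      by exists (fun l => rho ((a, q) :: l)).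
    exact: S_mono (S_comp hpq hq').
Qed.

Definition pend (Q Sigma : finType) (A : BA Q Sigma) (l : seq (Q * Q)) :=
  foldl (fun bt st => (bt || (st.1 \in final A)) && (st.2 \notin final A)) false l.

Definition sig' (Q Sigma : finType) (A : BA Q Sigma) r a p : strategy Q Sigma :=
  fun h s t b s' => epsilon (inhabits t) (spec' A r a p s t (pend A (rcons h (s, t))) b s').

Theorem lemma12 (Q Sigma : finType) (A : BA Q Sigma) (p q r : Q) (a : Sigma) :
  complete A ->
  q \in delta A r a ->
  delayed_sim A p q ->
  forall x y : Q, delayed_sim A x y -> delayed_sim (add_transition A r a p) x y.
Proof.
move=> hc hq /poor_rich hpq x y /poor_rich hxy.
exists (sig' A r a p) => ps als h0 hstep.
pose rs n := (dup_run (sig' A r a p) ps als y n).2.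
have hist : forall n, (dup_run (sig' A r a p) ps als y n).1 = mkseq (fun i => (ps i, rs i)) n.
  by elim => [//|n IH]; rewrite /= IH mkseqS.
pose bit n := pend A (mkseq (fun i => (ps i, rs i)) n.+1).
have bitS : forall n, bit n.+1 = (bit n || (ps n.+1 \in final A)) && (rs n.+1 \notin final A).
  by move=> n; rewrite /bit mkseqS /pend foldl_rcons.
have bitF : forall n, bit n -> rs n \notin final A.
  by case => [|n]; [rewrite /bit /= => /andP [] | rewrite bitS => /andP []].
have Spec : forall n, S A (ps n) (rs n) (bit n) ->
    spec' A r a p (ps n) (rs n) (bit n) (als n) (ps n.+1) (rs n.+1).
  move=> n hS.
  have -> : rs n.+1 = sig' A r a p (mkseq (fun i => (ps i, rs i)) n) (ps n) (rs n) (als n) (ps n.+1).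
    by rewrite -hist.
  rewrite /sig' -mkseqS -/(bit n); apply: epsilon_spec.
  exact: trap hc hq hpq hS (bitF n) (hstep n).
have Inv : forall n, S A (ps n) (rs n) (bit n).
  elim => [|n IH].
    by rewrite /bit /pend /= h0; apply: S_false_F.
  by have [_ [h2 _]] := Spec n IH; rewrite bitS.
split.
  by move=> i; have [h1 _] := Spec i (Inv i).
move=> i hi0; have hi : ps i \in final A := hi0; clear hi0.
case rF: (rs i \in final A); first by exists i.
have bi : bit i.
  by case: i hi rF => [|i] hi rF; [rewrite /bit /pend /= hi rF | rewrite bitS hi rF orbT].
have [k0 hk0] : exists k, Y A k (ps i) (rs i).
  by apply: claimA hc _ (bitF i bi); rewrite -bi.
suff : forall k0 i, bit i -> Y A k0 (ps i) (rs i) -> exists k, i <= k /\ rs k \in final A.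
  by move=> H; apply: (H k0 i bi hk0).
elim => [//|k IH] j bj hY.
have [_ [_ h3]] := Spec j (Inv j).
case: (h3 bj) => [hF|hY']; first by exists j.+1.
case rF': (rs j.+1 \in final A); first by exists j.+1.
have bj' : bit j.+1 by rewrite bitS bj rF'.
have [k' [hk' hk'']] := IH j.+1 bj' (hY' k hY).
by exists k'; split => //; exact: ltnW.
Qed.
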